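(* Let $m\ge4$, $a\in Q\otimes V^{\otimes m-4}\otimes Q$ and $b\in V^{\otimes m-2}$. Assume that there exists $p\ge1$ such that $|a\,\omega_0^l+b\,\omega_0^{l+1}|=0$ for all $l\ge p$. Then $a=0$.
   Context: $\mathbb{K}$ is a field of characteristic zero and $V$ a symplectic $\mathbb{K}$-vector space of dimension $2g$ with symplectic basis $a_1,\ldots,a_g,b_1,\ldots,b_g$; $\omega_0=\sum_{i=1}^g(a_i\otimes b_i-b_i\otimes a_i)\in V^{\otimes2}$ represents the symplectic form. $C\colon V^{\otimes2}\to\mathbb{K}$ is the non-degenerate pairing given by the symplectic form, $C(a_i\otimes b_j)=\delta_{ij}$, $C(b_i\otimes a_j)=-\delta_{ij}$, $C(a_i\otimes a_j)=C(b_i\otimes b_j)=0$ (so $C(\omega_0)=2g$), and $Q=\ker C\subset V^{\otimes 2}$. $T(V)$ is the tensor algebra and $|x|$ denotes the class of $x$ in $T(V)/[T(V),T(V)]$. *)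

(* Defs.v *)
From HB Require Import structures.
From mathcomp Require Import all_boot all_order all_algebra.
Set Implicit Arguments. Unset Strict Implicit. Unset Printing Implicit Defensive.
Import Order.TTheory GRing.Theory Num.Theory.
Local Open Scope ring_scope.

(* Basis of V = K^{2g}: inl i = a_i, inr i = b_i  (i < g). *)
Definition basis (g : nat) : Type := ('I_g + 'I_g)%type.

(* A (possibly infinite) formal sum of words; the tensor algebra T(V) is the
   subspace of those with bounded word length (see [inT]). The coefficient of
   the word x_1 ... x_n (i.e. of x_1 (x) ... (x) x_n) is [t [:: x_1; ..; x_n]]. *)
Definition tensor (K : fieldType) (g : nat) : Type := seq (basis g) -> K.

Section Tensors.
Variables (K : fieldType) (g : nat).
Notation T := (tensor K g).

Definition tzero : T := fun _ => 0.
Definition tone : T := fun w => if w is [::] then 1 else 0.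
Definition tadd (x y : T) : T := fun w => x w + y w.
Definition tmul (x y : T) : T :=
  fun w => \sum_(i < (size w).+1) x (take i w) * y (drop i w).
Definition tpow (x : T) (n : nat) : T := iter n (tmul x) tone.

Definition homog (n : nat) (x : T) : Prop := forall w, size w != n -> x w = 0.
(* x is in T(V) (finitely many nonzero coefficients, as basis is finite) *)
Definition inT (x : T) : Prop := exists N, forall w, (N < size w)%N -> x w = 0.

Definition sform (x y : basis g) : K :=
  match x, y with
  | inl i, inr j => (i == j)%:R
  | inr i, inl j => - (i == j)%:R
  | _, _ => 0
  end.

(* omega_0 = sum_i (a_i (x) b_i - b_i (x) a_i) *)
Definition omega0 : T :=
  fun w => match w with [:: x; y] => sform x y | _ => 0 end.

Definition Cpair (q : T) : K :=
  \sum_(i < g) (q [:: inl i; inr i] - q [:: inr i; inl i]).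

Definition inQ (q : T) : Prop := homog 2 q /\ Cpair q = 0.

Definition inQVQ (n : nat) (a : T) : Prop :=
  exists k (q1 v q2 : 'I_k -> T),
    (forall i, [/\ inQ (q1 i), homog n (v i) & inQ (q2 i)]) /\
    forall w, a w = \sum_(i < k) tmul (tmul (q1 i) (v i)) (q2 i) w.

(* |x| = 0 in T(V)/[T(V),T(V)] : x is a finite sum of commutators *)
Definition cyc_zero (x : T) : Prop :=
  exists k (u v : 'I_k -> T),
    (forall i, inT (u i) /\ inT (v i)) /\
    forall w, x w = \sum_(i < k) (tmul (u i) (v i) w - tmul (v i) (u i) w).

End Tensors.

(* Main.v *)
Require Import Defs.
From HB Require Import structures.
From mathcomp Require Import all_boot all_order all_algebra.
Set Implicit Arguments. Unset Strict Implicit. Unset Printing Implicit Defensive.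
Import Order.TTheory GRing.Theory Num.Theory.
Local Open Scope ring_scope.
From mathcomp Require Import zify ring.
Section S.
Variables (K : fieldType) (g : nat).
Local Notation T := (tensor K g).
Local Notation B := (basis g).
Local Notation s := (@sform K g).

Lemma tmul_homogl (x y : T) n w : homog n x ->
  tmul x y w = if (n <= size w)%N then x (take n w) * y (drop n w) else 0.
Proof.
move=> hx; rewrite /tmul; case: leqP => h.
  rewrite (bigD1 (Ordinal (h : (n < (size w).+1)%N))) //= big1 ?addr0 // => i /eqP hi.
  rewrite hx ?mul0r // size_takel; last by rewrite -ltnS.
  by apply/eqP=> e; apply: hi; apply: val_inj.
rewrite big1 // => i _; rewrite hx ?mul0r // size_takel; last by rewrite -ltnS.
by rewrite neq_ltn (leq_ltn_trans _ h) // -ltnS.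
Qed.

Lemma tmul_homogr (x y : T) n w : homog n y ->
  tmul x y w = if (n <= size w)%N then x (take (size w - n) w) * y (drop (size w - n) w) else 0.
Proof.
move=> hy; rewrite /tmul; case: leqP => h.
  have hi : (size w - n < (size w).+1)%N by rewrite ltnS leq_subr.
  rewrite (bigD1 (Ordinal hi)) //= big1 ?addr0 // => i /eqP hi'.
  rewrite hy ?mulr0 // size_drop.
  apply/eqP=> e; apply: hi'; apply: val_inj => /=.
  have := ltn_ord i; rewrite ltnS => hle. lia.
rewrite big1 // => i _; rewrite hy ?mulr0 // size_drop.
apply/eqP => e. have := ltn_ord i. lia.
Qed.

Fixpoint Om (w : seq B) : K :=
  match w with
  | x :: y :: r => s x y * Om r
  | [::] => 1
  | _ => 0
  end.

Lemma omega0_homog : homog 2 (@omega0 K g).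
Proof. by move=> [|x [|y [|z r]]]. Qed.

Lemma tpowE l w : tpow (@omega0 K g) l w = if size w == (2 * l)%N then Om w else 0.
Proof.
elim: l w => [|l IH] w.
  by case: w.
rewrite /tpow iterS -/(tpow _ l) (tmul_homogl _ _ omega0_homog).
case: w => [|x [|y r]] /=.
- by [].
- by rewrite if_same.
rewrite take0 drop0 IH mulnS !eqSS.
by case: ifP; rewrite ?mulr0.
Qed.
End S.
Section Cyc.
Variables (K : fieldType) (g : nat).
Local Notation T := (tensor K g).
Local Notation B := (basis g).

Definition cs (f : seq B -> K) (w : seq B) := \sum_(i < size w) f (rot i w).

Lemma cs_rot1 f w : cs f (rot 1 w) = cs f w.
Proof.
rewrite /cs size_rot.
case: w => [|x w]; first by rewrite !big_ord0.
set n := size w.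
transitivity (\sum_(i < n.+1) f (rot i.+1 (x :: w))).
  apply: eq_bigr => i _; rewrite rot_rot -rotS //.
have h : \sum_(i < n.+2) f (rot i (x :: w)) = f (rot 0 (x :: w)) + \sum_(i < n.+1) f (rot i.+1 (x :: w)).
  exact: big_ord_recl.
have h' : \sum_(i < n.+2) f (rot i (x :: w)) = \sum_(i < n.+1) f (rot i (x :: w)) + f (rot n.+1 (x :: w)).
  exact: big_ord_recr.
have h0 : rot n.+1 (x :: w) = rot 0 (x :: w) by rewrite rot0 -[n.+1]/(size (x :: w)) rot_size.
rewrite h0 in h'.
apply: (addrI (f (rot 0 (x :: w)))). by rewrite -h h' addrC.
Qed.

Lemma cs_rot f w j : cs f (rot j w) = cs f w.
Proof.
elim: j => [|j IH]; first by rewrite rot0.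
case: (ltnP j (size w)) => h.
  by rewrite rotS // cs_rot1.
by rewrite rot_oversize // leqW.
Qed.

Lemma cs_tmul (u v : T) w : cs (tmul u v) w = cs (tmul v u) w.
Proof.
rewrite /cs /tmul.
set n := size w.
have E1 : \sum_(i < n) \sum_(j < (size (rot i w)).+1) u (take j (rot i w)) * v (drop j (rot i w))
   = \sum_(j < n.+1) \sum_(i < n) u (take j (rot i w)) * v (drop j (rot i w)).
  rewrite exchange_big /=. apply: eq_bigr => i _. by rewrite size_rot.
have E2 : \sum_(i < n) \sum_(j < (size (rot i w)).+1) v (take j (rot i w)) * u (drop j (rot i w))
   = \sum_(j < n.+1) \sum_(i < n) v (take j (rot i w)) * u (drop j (rot i w)).
  rewrite exchange_big /=. apply: eq_bigr => i _. by rewrite size_rot.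
rewrite E1 E2 (reindex_inj rev_ord_inj) /=.
apply: eq_bigr => j _.
have hj : (j <= n)%N by rewrite -ltnS.
rewrite subSS.
have := cs_rot (fun r => v (take j r) * u (drop j r)) w (n - j).
rewrite /cs size_rot -/n => <-.
apply: eq_bigr => i _.
rewrite [in RHS]rot_rot.
set r := rot i w.
have hr : size r = n by rewrite size_rot.
rewrite mulrC /rot take_cat drop_cat size_drop hr.
have hlt : (j < n - (n - j))%N = false by rewrite subKn // ltnn.
rewrite subKn // ltnn subnn take0 drop0 cats0.
by [].
Qed.
End Cyc.
Section Basic.
Variables (K : fieldType) (g : nat).
Local Notation T := (tensor K g).
Local Notation B := (basis g).
Local Notation s := (@sform K g).

Lemma cyc_zero_cs (x : T) : cyc_zero x -> forall w, cs x w = 0.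
Proof.
move=> [k [u [v [_ hx]]]] w; rewrite /cs.
under eq_bigr do rewrite hx.
rewrite exchange_big /= big1 // => i _.
rewrite sumrB.
have := cs_tmul (u i) (v i) w; rewrite /cs => ->.
by rewrite subrr.
Qed.

Lemma tmul_homog (x y : T) p q : homog p x -> homog q y -> homog (p + q) (tmul x y).
Proof.
move=> hx hy w hw; rewrite (tmul_homogl _ _ hx); case: ifP => // h.
rewrite hy ?mulr0 // size_drop; apply: contra hw => /eqP <-.
by rewrite subnKC.
Qed.

Definition Cp (q : T) := \sum_(x : B) \sum_(y : B) s x y * q [:: x; y].

Lemma CpE q : Cp q = Cpair q.
Proof.
rewrite /Cp /Cpair big_sumType /= sumrB; congr (_ + _).
  apply: eq_bigr => i _; rewrite big_sumType /= big1 ?add0r => [|j _]; last by rewrite mul0r.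
  rewrite (bigD1 i) //= eqxx mul1r big1 ?addr0 // => j /negPf hj.
  by rewrite eq_sym hj mul0r.
rewrite -sumrN; apply: eq_bigr => i _; rewrite big_sumType /= [X in _ + X]big1 ?addr0 => [|j _]; last by rewrite mul0r.
rewrite (bigD1 i) //= eqxx mulNr mul1r big1 ?addr0 // => j /negPf hj.
by rewrite eq_sym hj oppr0 mul0r.
Qed.

Lemma S2E : \sum_(x : B) \sum_(y : B) s x y * s x y = (2 * g)%:R.
Proof.
have := CpE (@omega0 K g); rewrite /Cp /= => ->.
rewrite /Cpair /=.
transitivity (\sum_(i < g) (2%:R : K)).
  by apply: eq_bigr => i _; rewrite !eqxx /= opprK.
rewrite sumr_const card_ord.
rewrite mulnC natrM mulr_natr.
by rewrite -[RHS]mulr_natl mulrC mulr_natl.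
Qed.

End Basic.
Section AProps.
Variables (K : fieldType) (g : nat).
Local Notation T := (tensor K g).
Local Notation B := (basis g).
Local Notation s := (@sform K g).

Lemma sum_Cp_zero (I : finType) (q : I -> T) (c : I -> K) :
  (forall i, Cp (q i) = 0) ->
  \sum_(x : B) \sum_(y : B) s x y * (\sum_i q i [:: x; y] * c i) = 0.
Proof.
move=> hq.
transitivity (\sum_i Cp (q i) * c i); last by rewrite big1 // => i _; rewrite hq mul0r.
rewrite /Cp.
under eq_bigr do under eq_bigr do rewrite big_distrr.
under eq_bigr do rewrite exchange_big.
rewrite exchange_big; apply: eq_bigr => i _.
rewrite big_distrl; apply: eq_bigr => x _.
rewrite big_distrl; apply: eq_bigr => y _.
exact: mulrA.
Qed.

Lemma inQVQ_props n (a : T) : inQVQ n a ->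
 [/\ homog (n + 4) a,
     forall r, \sum_(x : B) \sum_(y : B) s x y * a (x :: y :: r) = 0 &
     forall r, \sum_(x : B) \sum_(y : B) s x y * a (r ++ [:: x; y]) = 0].
Proof.
move=> [k [q1 [v [q2 [hq ha]]]]].
have hX : forall i, homog (2 + n) (tmul (q1 i) (v i)).
  by move=> i; have [[h1 _] hv _] := hq i; apply: tmul_homog.
have hh : homog (n + 4) a.
  move=> w hw; rewrite ha big1 // => i _.
  have [_ _ [h2 _]] := hq i.
  apply: (tmul_homog (hX i) h2). by have -> : (2 + n + 2 = n + 4)%N by lia.
split => // r.
  have e : forall x y, a (x :: y :: r) =
     \sum_i q1 i [:: x; y] * ((if (n.+2 <= (size r).+2)%N then 1 else 0) * v i (take n r) * q2 i (drop n r)).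
    move=> x y; rewrite ha; apply: eq_bigr => i _.
    have [[h1 _] hv [h2 _]] := hq i.
    rewrite (tmul_homogl _ _ (hX i)) /= add2n /=.
    rewrite (tmul_homogl _ _ h1) /=.
    rewrite take0 drop0 add0n.
    by case: ifP => _; rewrite ?(mul0r, mul1r, mulr0, mulr1) // !mulrA.
  under eq_bigr do under eq_bigr do rewrite e.
  by apply: sum_Cp_zero => i; have [[_ c1] _ _] := hq i; rewrite CpE.
case: (eqVneq (size r) (n + 2)) => hr; last first.
  rewrite big1 // => x _; rewrite big1 // => y _.
  rewrite hh ?mulr0 // size_cat /=.
  apply: contra hr => /eqP h; apply/eqP; lia.
have e : forall x y, a (r ++ [:: x; y]) =
     \sum_i q2 i [:: x; y] * tmul (q1 i) (v i) r.
  move=> x y; rewrite ha; apply: eq_bigr => i _.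
  rewrite (tmul_homogl _ _ (hX i)) size_cat /= hr.
  have -> : (2 + n <= n + 2 + 2)%N by lia.
  have -> : (2 + n = size r)%N by rewrite hr addnC.
  by rewrite take_size_cat // drop_size_cat // mulrC.
under eq_bigr do under eq_bigr do rewrite e.
by apply: sum_Cp_zero => i; have [_ _ [_ c2]] := hq i; rewrite CpE.
Qed.
End AProps.
Section OmZ.
Variables (K : fieldType) (g : nat) (i0 : 'I_g).
Local Notation B := (basis g).
Local Notation s := (@sform K g).
Local Notation Om := (@Om K g).

Lemma s_xx (x : B) : s x x = 0.
Proof. by case: x. Qed.

Lemma Om_cat (x y : seq B) : ~~ odd (size x) -> Om (x ++ y) = Om x * Om y.
Proof.
move: {2}(size x) (leqnn (size x)) => n; elim: n x => [|n IH] x hs ho.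
  by case: x hs ho => //= _ _; rewrite mul1r.
case: x hs ho => [|a [|b x]] hs ho /=.
- by rewrite mul1r.
- by [].
rewrite IH ?mulrA //.
  by apply: ltnW.
by move: ho; rewrite /= negbK.
Qed.

Lemma Om_cat_odd (x y : seq B) c : odd (size x) -> Om (x ++ c :: y) = Om (rcons x c) * Om y.
Proof. by move=> h; rewrite -cat_rcons Om_cat // size_rcons /= h. Qed.

Definition zf (j : nat) : B := if odd (uphalf j) then inr i0 else inl i0.

Lemma zf_odd j : odd j -> zf j.+1 = zf j.
Proof. by move=> h; rewrite /zf /= uphalf_half h. Qed.

Lemma zf_even j : ~~ odd j -> s (zf j) (zf j.+1) != 0.
Proof.
move=> h; rewrite /zf /= uphalf_half (negbTE h) add0n.
case: (odd j./2) => /=; rewrite eqxx /= ?oppr_eq0 oner_neq0 //.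
Qed.

Variable L : nat.
Definition Zw := mkseq zf L.

Definition odd_eq (z : seq B) := forall j, odd j -> (j.+1 < size z)%N -> nth (inl i0) z j = nth (inl i0) z j.+1.

Lemma odd_eq_Z : odd_eq Zw.
Proof.
move=> j hj hs; rewrite size_mkseq in hs.
rewrite (nth_mkseq _ _ hs) (nth_mkseq _ _ (ltnW hs)).
by rewrite zf_odd.
Qed.

Lemma odd_eq_take k z : odd_eq z -> odd_eq (take k z).
Proof.
move=> h j hj hs; rewrite size_take in hs.
have [hk hz] : (j.+1 < k)%N /\ (j.+1 < size z)%N.
  by move: hs; case: (ltnP k (size z)) => h1 h2; split; lia.
rewrite (nth_take _ (ltnW hk)) (nth_take _ hk).
exact: h.
Qed.

Lemma Om_zero_gen z W j r : odd_eq z -> odd (size W + j) -> (j + 3 <= size z)%N ->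
  Om (W ++ drop j z ++ r) = 0.
Proof.
move=> hz hodd hj.
have key : forall j' W', odd j' -> (j' + 2 <= size z)%N -> ~~ odd (size W') ->
    Om (W' ++ drop j' z ++ r) = 0.
  move=> j' W' hj' hs hW'.
  have h1 : (j' < size z)%N by lia.
  have h2 : (j'.+1 < size z)%N by lia.
  rewrite Om_cat // (drop_nth (inl i0) h1) (drop_nth (inl i0) h2) /= -(hz j' hj' h2).
  by rewrite s_xx mul0r mulr0.
case: (boolP (odd (size W))) => hW.
  have hje : ~~ odd j by move: hodd; rewrite oddD hW.
  have h1 : (j < size z)%N by lia.
  rewrite (drop_nth (inl i0) h1) /= Om_cat_odd //.
  have -> : Om (drop j.+1 z ++ r) = Om ([::] ++ drop j.+1 z ++ r) by [].
  rewrite key ?mulr0 //.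
  lia.
apply: key => //; last lia.
by move: hodd; rewrite oddD (negbTE hW).
Qed.

End OmZ.
Lemma oddE k : odd k = (k %% 2 == 1)%N.
Proof. by rewrite modn2; case: (odd k). Qed.

Lemma drop_catl (T0 : Type) n (s1 s2 : seq T0) : (n <= size s1)%N -> drop n (s1 ++ s2) = drop n s1 ++ s2.
Proof.
move=> h; rewrite drop_cat; case: ltnP => // h'.
have e : n = size s1 by apply/eqP; rewrite eqn_leq h h'.
by rewrite e subnn drop0 drop_size.
Qed.

Section Split.
Variables (K : fieldType) (g : nat).
Local Notation B := (basis g).
Local Notation s := (@sform K g).
Local Notation Om := (@Om K g).

Lemma tn_split (c : seq B -> K) n Y1 x y Y2 : (n <= size Y1)%N -> ~~ odd (size Y1 - n) ->
  c (take n (Y1 ++ x :: y :: Y2)) * Om (drop n (Y1 ++ x :: y :: Y2)) =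
  s x y * (c (take n Y1) * Om (drop n Y1 ++ Y2)).
Proof.
move=> h1 h2; rewrite takel_cat // drop_catl // !Om_cat ?size_drop //=.
ring.
Qed.

Definition good (F : B -> B -> B -> B -> K) :=
  exists C D : B -> B -> K, forall x0 x1 y0 y1,
    F x0 x1 y0 y1 = s x0 x1 * C y0 y1 + s y0 y1 * D x0 x1.

Lemma good0 F : (forall x0 x1 y0 y1, F x0 x1 y0 y1 = 0) -> good F.
Proof. by move=> h; exists (fun _ _ => 0), (fun _ _ => 0) => *; rewrite h !mulr0 addr0. Qed.

Lemma goodD F G : good F -> good G -> good (fun x0 x1 y0 y1 => F x0 x1 y0 y1 + G x0 x1 y0 y1).
Proof.
move=> [C1 [D1 h1]] [C2 [D2 h2]].
exists (fun y0 y1 => C1 y0 y1 + C2 y0 y1), (fun x0 x1 => D1 x0 x1 + D2 x0 x1) => x0 x1 y0 y1.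
rewrite h1 h2; ring.
Qed.

Lemma good_sum (I : finType) (F : I -> B -> B -> B -> B -> K) :
  (forall i, good (F i)) -> good (fun x0 x1 y0 y1 => \sum_i F i x0 x1 y0 y1).
Proof.
move=> h.
have : forall r : seq I, good (fun x0 x1 y0 y1 => \sum_(i <- r) F i x0 x1 y0 y1).
  elim => [|i r IH].
    by apply: good0 => *; rewrite big_nil.
  have := goodD (h i) IH => [[C [D hh]]].
  by exists C, D => x0 x1 y0 y1; rewrite big_cons hh.
move=> /(_ (index_enum I)) [C [D hh]]; exists C, D => x0 x1 y0 y1.
by rewrite -hh.
Qed.
End Split.
Section Fam.
Variables (K : fieldType) (g : nat) (i0 : 'I_g) (m l n d : nat) (M : seq (basis g)) (c : seq (basis g) -> K).
Hypotheses (hm : (4 <= m)%N) (hM : size M = (m - 4)%N) (hl : (m + 4 <= 2 * l)%N)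
  (hnd : (n + d)%N = m) (hd : d = 0%N \/ d = 2%N).
Local Notation B := (basis g).
Local Notation s := (@sform K g).
Local Notation Om := (@Om K g).
Local Notation Z := (Zw i0 (2 * l)).

Definition U (x0 x1 y0 y1 : B) : seq B := [:: x0, x1 & M ++ [:: y0; y1]].
Arguments U : simpl never.
Definition tn (y : seq B) := c (take n y) * Om (drop n y).

Lemma size_Z : size Z = (2 * l)%N.
Proof. by rewrite size_mkseq. Qed.

Lemma size_U x0 x1 y0 y1 : size (U x0 x1 y0 y1) = m.
Proof. rewrite /U /= size_cat hM /=; lia. Qed.

Lemma oeZ : odd_eq i0 Z.
Proof. exact: odd_eq_Z. Qed.

Lemma famA i : (i < m)%N -> (0 < i)%N || (d == 2%N) ->
  good (fun x0 x1 y0 y1 => tn (drop i (U x0 x1 y0 y1) ++ Z ++ take i (U x0 x1 y0 y1))).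
Proof.
move=> hi hi0.
have hZ := size_Z.
case: (boolP (odd i)) => ho.
  apply: good0 => x0 x1 y0 y1; rewrite /tn.
  set u := U x0 x1 y0 y1.
  have hu : size u = m by apply: size_U.
  suff -> : Om (drop n (drop i u ++ Z ++ take i u)) = 0 by rewrite mulr0.
  case: (ltnP n (m - i)) => hni.
    rewrite drop_catl ?size_drop ?hu; last lia.
    have hW : size (drop n (drop i u)) = 1%N.
      rewrite !size_drop hu; move: ho; rewrite oddE; case: hd => hd'; lia.
    have := @Om_zero_gen K g i0 Z (drop n (drop i u)) (0) (take i u) oeZ.
    rewrite drop0 hZ hW => -> //; lia.
  rewrite drop_cat size_drop hu ltnNge hni /= drop_cat hZ.
  have -> : (n - (m - i) < 2 * l)%N by lia.
  have := @Om_zero_gen K g i0 Z ([::]) (n - (m - i)) (take i u) oeZ => /= -> //.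
    move: ho; rewrite !oddE; case: hd => hd'; lia.
  lia.
case: (posnP i) => [hi0'|hip].
  have hd2 : d = 2%N by move: hi0; rewrite hi0' /=; case: hd => -> .
  exists (fun _ _ => 0), (fun x0 x1 => c (take n [:: x0, x1 & M]) * Om (drop n [:: x0, x1 & M] ++ Z)).
  move=> x0 x1 y0 y1; rewrite mulr0 add0r hi0' drop0 take0 cats0 /tn.
  have -> : U x0 x1 y0 y1 ++ Z = [:: x0, x1 & M] ++ y0 :: y1 :: Z by rewrite /U /= -catA.
  rewrite tn_split //.
  1,2: rewrite /= hM ?oddE; lia.
have [i' ei] : exists i', i = i'.+2 by exists i.-2; move: ho; rewrite oddE; lia.
rewrite ei in ho hi *.
exists (fun y0 y1 => c (take n (drop i' (M ++ [:: y0; y1]) ++ Z)) *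
   Om (drop n (drop i' (M ++ [:: y0; y1]) ++ Z) ++ take i' (M ++ [:: y0; y1]))), (fun _ _ => 0).
move=> x0 x1 y0 y1; rewrite mulr0 addr0 /tn /U /=.
rewrite catA tn_split // size_cat size_drop hZ size_cat hM /=; first lia.
move: ho; rewrite !oddE; case: hd => hd'; lia.
Qed.

Lemma famB k : (k < 2 * l)%N ->
  good (fun x0 x1 y0 y1 => tn (drop k Z ++ U x0 x1 y0 y1 ++ take k Z)).
Proof.
move=> hk.
have hZ := size_Z.
have hdk : size (drop k Z) = (2 * l - k)%N by rewrite size_drop hZ.
have oeT : odd_eq i0 (take k Z) by apply: odd_eq_take; exact: oeZ.
have hTk : size (take k Z) = k by rewrite size_takel // hZ ltnW.
have Dg : forall x0 x1 y0 y1, (n <= size (drop k Z ++ [:: x0, x1 & M]))%N ->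
     ~~ odd (size (drop k Z ++ [:: x0, x1 & M]) - n) ->
     tn (drop k Z ++ U x0 x1 y0 y1 ++ take k Z) =
     s y0 y1 * (c (take n (drop k Z ++ [:: x0, x1 & M])) * Om (drop n (drop k Z ++ [:: x0, x1 & M]) ++ take k Z)).
  move=> x0 x1 y0 y1 h1 h2.
  have -> : drop k Z ++ U x0 x1 y0 y1 ++ take k Z = (drop k Z ++ [:: x0, x1 & M]) ++ y0 :: y1 :: take k Z.
    by rewrite /U /= -!catA.
  by rewrite /tn tn_split.
have gD : (forall x0 x1 : B, (n <= size (drop k Z ++ [:: x0, x1 & M]))%N /\
     ~~ odd (size (drop k Z ++ [:: x0, x1 & M]) - n)) ->
     good (fun x0 x1 y0 y1 => tn (drop k Z ++ U x0 x1 y0 y1 ++ take k Z)).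
  move=> hyp.
  exists (fun _ _ => 0), (fun x0 x1 => c (take n (drop k Z ++ [:: x0, x1 & M])) * Om (drop n (drop k Z ++ [:: x0, x1 & M]) ++ take k Z)).
  move=> x0 x1 y0 y1; rewrite mulr0 add0r.
  by have [h1 h2] := hyp x0 x1; rewrite Dg.
case: (leqP n (2 * l - k)) => hnk.
  case: (boolP (odd (k + n))) => hkn.
    case: (eqVneq (k + n)%N (2 * l - 1)%N) => hlast.
      case: (boolP (odd m)) => hmo.
        apply: gD => x0 x1; rewrite size_cat hdk /= hM; split; first lia.
        move: hmo hkn; rewrite !oddE; lia.
      apply: good0 => x0 x1 y0 y1; rewrite /tn.
      rewrite drop_catl ?hdk // drop_drop.
      have := @Om_zero_gen K g i0 (take k Z) (drop (n + k) Z ++ U x0 x1 y0 y1) (0) ([::]) oeT.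
      rewrite drop0 cats0 -catA hTk => -> //; last lia.
        by rewrite mulr0.
      rewrite size_cat size_drop hZ size_U addn0.
      move: hmo; rewrite !oddE; lia.
    apply: good0 => x0 x1 y0 y1; rewrite /tn.
    rewrite drop_catl ?hdk // drop_drop.
    have := @Om_zero_gen K g i0 Z ([::]) (n + k) (U x0 x1 y0 y1 ++ take k Z) oeZ.
    rewrite /= => -> //.
        by rewrite mulr0.
      by rewrite add0n addnC.
    rewrite hZ. move: hkn; rewrite oddE. lia.
  exists (fun y0 y1 => c (take n (drop k Z)) * Om (drop n (drop k Z) ++ (M ++ [:: y0; y1]) ++ take k Z)), (fun _ _ => 0).
  move=> x0 x1 y0 y1; rewrite mulr0 addr0 /tn /U /=.
  rewrite tn_split ?hdk //.
  move: hkn; rewrite !oddE; lia.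
case: (boolP (odd (m - (n - (2 * l - k))))) => hj.
  apply: good0 => x0 x1 y0 y1; rewrite /tn.
  rewrite drop_cat hdk ifF; last by rewrite ltnNge (ltnW hnk).
  rewrite drop_catl ?size_U; last lia.
  have := @Om_zero_gen K g i0 (take k Z) (drop (n - (2 * l - k)) (U x0 x1 y0 y1)) (0) ([::]) oeT.
  rewrite drop0 cats0 hTk => -> //; last lia.
    by rewrite mulr0.
  by rewrite size_drop size_U addn0.
apply: gD => x0 x1; rewrite size_cat hdk /= hM; split.
  move: hj; rewrite oddE; lia.
move: hj; rewrite !oddE; lia.
Qed.
End Fam.
Section Assemble.
Variables (K : fieldType) (g : nat) (i0 : 'I_g) (m l : nat) (M : seq (basis g)) (a b : seq (basis g) -> K).
Hypotheses (hm : (4 <= m)%N) (hM : size M = (m - 4)%N) (hl : (m + 4 <= 2 * l)%N).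
Local Notation B := (basis g).
Local Notation s := (@sform K g).
Local Notation Om := (@Om K g).
Local Notation Z := (Zw i0 (2 * l)).

Definition tfun (y : seq B) := a (take m y) * Om (drop m y) + b (take (m - 2) y) * Om (drop (m - 2) y).

Lemma sizeU x0 x1 y0 y1 : size (U M x0 x1 y0 y1) = m.
Proof. rewrite /U /= size_cat hM /=; lia. Qed.

Lemma rotA (u z : seq B) i : (i <= size u)%N -> rot i (u ++ z) = drop i u ++ z ++ take i u.
Proof.
move=> h; rewrite /rot drop_catl // takel_cat // catA //.
Qed.

Lemma rotB (u z : seq B) k : rot (size u + k) (u ++ z) = drop k z ++ u ++ take k z.
Proof.
by rewrite /rot drop_cat take_cat ltnNge leq_addr /= addKn.
Qed.

Lemma good_ext (F G : B -> B -> B -> B -> K) :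
  (forall x0 x1 y0 y1, F x0 x1 y0 y1 = G x0 x1 y0 y1) -> good G -> good F.
Proof. by move=> e [C [D h]]; exists C, D => *; rewrite e h. Qed.

Lemma partA : good (fun x0 x1 y0 y1 =>
   \sum_(i < m) (tn m a (drop i (U M x0 x1 y0 y1) ++ Z ++ take i (U M x0 x1 y0 y1)) +
                 tn (m - 2) b (drop i (U M x0 x1 y0 y1) ++ Z ++ take i (U M x0 x1 y0 y1)))
   - a (U M x0 x1 y0 y1) * Om Z).
Proof.
have hm0 : (0 < m)%N by lia.
have e2 : (m - 2 + 2 = m)%N by lia.
apply: (@good_ext _ (fun x0 x1 y0 y1 =>
   tn (m - 2) b (drop 0 (U M x0 x1 y0 y1) ++ Z ++ take 0 (U M x0 x1 y0 y1)) +
   \sum_(i < m) (if i != Ordinal hm0 then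
       (tn m a (drop i (U M x0 x1 y0 y1) ++ Z ++ take i (U M x0 x1 y0 y1)) +
        tn (m - 2) b (drop i (U M x0 x1 y0 y1) ++ Z ++ take i (U M x0 x1 y0 y1))) else 0))).
  move=> x0 x1 y0 y1.
  rewrite (bigD1 (Ordinal hm0)) //= big_mkcond /=.
  have -> : tn m a (drop 0 (U M x0 x1 y0 y1) ++ Z ++ take 0 (U M x0 x1 y0 y1)) = a (U M x0 x1 y0 y1) * Om Z.
    by rewrite drop0 take0 cats0 /tn takel_cat ?sizeU // drop_catl ?sizeU // take_oversize ?sizeU // drop_oversize ?sizeU.
  ring.

apply: goodD.
  by apply: (famA i0 b hm hM hl e2 (or_intror erefl)) => //; rewrite eqxx orbT.
apply: good_sum => i.
case: (boolP (i != Ordinal hm0)) => hi.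
  apply: goodD.
    apply: (famA i0 a hm hM hl (addn0 m) (or_introl erefl)) => //.
    rewrite orbF lt0n; apply/eqP => h; move/eqP: hi; apply; apply: val_inj; exact: h.
  by apply: (famA i0 b hm hM hl e2 (or_intror erefl)) => //; rewrite eqxx orbT.
by apply: good0.
Qed.

Lemma partB : good (fun x0 x1 y0 y1 =>
   \sum_(k < 2 * l) (tn m a (drop k Z ++ U M x0 x1 y0 y1 ++ take k Z) + tn (m - 2) b (drop k Z ++ U M x0 x1 y0 y1 ++ take k Z))).
Proof.
have e2 : (m - 2 + 2 = m)%N by lia.
apply: good_sum => k; apply: goodD.
  exact: (famB i0 a hm hM hl (addn0 m) (or_introl erefl)).
exact: (famB i0 b hm hM hl e2 (or_intror erefl)).
Qed.

Lemma shape : good (fun x0 x1 y0 y1 =>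
   cs tfun (U M x0 x1 y0 y1 ++ Z) - a (U M x0 x1 y0 y1) * Om Z).
Proof.
have hZ : size Z = (2 * l)%N by rewrite size_mkseq.
apply: good_ext (goodD partA partB) => x0 x1 y0 y1.
set u := U M x0 x1 y0 y1.
have hu : size u = m by rewrite sizeU.
rewrite /cs size_cat hu hZ big_split_ord /=.
have -> : \sum_(i < m) tfun (rot (lshift (2 * l) i) (u ++ Z)) =
   \sum_(i < m) (tn m a (drop i u ++ Z ++ take i u) + tn (m - 2) b (drop i u ++ Z ++ take i u)).
  apply: eq_bigr => i _; rewrite rotA; first by [].
  by rewrite hu; exact: ltnW (ltn_ord i).
have -> : \sum_(k < 2 * l) tfun (rot (rshift m k) (u ++ Z)) =
   \sum_(k < 2 * l) (tn m a (drop k Z ++ u ++ take k Z) + tn (m - 2) b (drop k Z ++ u ++ take k Z)).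
  apply: eq_bigr => k _.
  have -> : nat_of_ord (rshift m k) = (size u + k)%N by rewrite hu.
  by rewrite rotB.
ring.
Qed.
End Assemble.
Section Final.
Variables (K : fieldType) (g : nat).
Local Notation B := (basis g).
Local Notation s := (@sform K g).
Local Notation Om := (@Om K g).

Definition SS (f : B -> B -> K) := \sum_(x0 : B) \sum_(x1 : B) f x0 x1.

Lemma SSD f h : SS (fun x0 x1 => f x0 x1 + h x0 x1) = SS f + SS h.
Proof. by rewrite /SS -big_split; apply: eq_bigr => x0 _; rewrite big_split. Qed.

Lemma SSZl c f : SS (fun x0 x1 => c * f x0 x1) = c * SS f.
Proof. by rewrite /SS big_distrr; apply: eq_bigr => x0 _; rewrite big_distrr. Qed.

Lemma SSZr c f : SS (fun x0 x1 => f x0 x1 * c) = SS f * c.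
Proof. by rewrite /SS big_distrl; apply: eq_bigr => x0 _; rewrite big_distrl. Qed.

Lemma SS_ext f h : (forall x0 x1, f x0 x1 = h x0 x1) -> SS f = SS h.
Proof. by move=> e; apply: eq_bigr => x0 _; apply: eq_bigr => x1 _; rewrite e. Qed.

Lemma final_alg (w : K) (A' : B -> B -> B -> B -> K) (C D : B -> B -> K) :
  w != 0 -> SS (fun x y => s x y * s x y) != 0 ->
  (forall y0 y1, SS (fun x0 x1 => s x0 x1 * A' x0 x1 y0 y1) = 0) ->
  (forall x0 x1, SS (fun y0 y1 => s y0 y1 * A' x0 x1 y0 y1) = 0) ->
  (forall x0 x1 y0 y1, - (A' x0 x1 y0 y1 * w) = s x0 x1 * C y0 y1 + s y0 y1 * D x0 x1) ->
  forall x0 x1 y0 y1, A' x0 x1 y0 y1 = 0.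
Proof.
move=> hw hS h1 h2 h.
set S2 := SS (fun x y => s x y * s x y).
set al := SS (fun x0 x1 => s x0 x1 * D x0 x1).
set be := SS (fun y0 y1 => s y0 y1 * C y0 y1).
have E1 : forall y0 y1, S2 * C y0 y1 + s y0 y1 * al = 0.
  move=> y0 y1.
  have := SS_ext (fun x0 x1 => h x0 x1 y0 y1 ) => e.
  transitivity (SS (fun x0 x1 => s x0 x1 * (- (A' x0 x1 y0 y1 * w)))).
    rewrite (SS_ext (h := fun x0 x1 => (s x0 x1 * s x0 x1) * C y0 y1 + s y0 y1 * (s x0 x1 * D x0 x1))).
      by rewrite SSD SSZr SSZl.
    by move=> x0 x1; rewrite h; ring.
  rewrite (SS_ext (h := fun x0 x1 => - w * (s x0 x1 * A' x0 x1 y0 y1))).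
    by rewrite SSZl h1 mulr0.
  by move=> x0 x1; ring.
have E2 : forall x0 x1, s x0 x1 * be + S2 * D x0 x1 = 0.
  move=> x0 x1.
  transitivity (SS (fun y0 y1 => s y0 y1 * (- (A' x0 x1 y0 y1 * w)))).
    rewrite (SS_ext (h := fun y0 y1 => s x0 x1 * (s y0 y1 * C y0 y1) + (s y0 y1 * s y0 y1) * D x0 x1)).
      by rewrite SSD SSZr SSZl.
    by move=> y0 y1; rewrite h; ring.
  rewrite (SS_ext (h := fun y0 y1 => - w * (s y0 y1 * A' x0 x1 y0 y1))).
    by rewrite SSZl h2 mulr0.
  by move=> y0 y1; ring.
have hC : forall y0 y1, C y0 y1 = - (s y0 y1 * al) / S2.
  move=> y0 y1; apply: (mulIf hS); rewrite mulfVK // mulrC; apply/eqP; rewrite -subr_eq0 opprK.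
  by rewrite E1.
have hD : forall x0 x1, D x0 x1 = - (s x0 x1 * be) / S2.
  move=> x0 x1; apply: (mulIf hS); rewrite mulfVK // mulrC; apply/eqP; rewrite -subr_eq0 opprK.
  by rewrite addrC E2.
have E3 : al + be = 0.
  have : be = SS (fun y0 y1 => (s y0 y1 * s y0 y1) * (- al / S2)).
    by apply: SS_ext => y0 y1; rewrite hC; ring.
  rewrite SSZr -/S2 => ->.
  rewrite mulrA [S2 * _]mulrC -mulrA divff // mulr1; ring.
move=> x0 x1 y0 y1.
have := h x0 x1 y0 y1; rewrite hC hD.
have -> : s x0 x1 * (- (s y0 y1 * al) / S2) + s y0 y1 * (- (s x0 x1 * be) / S2)
   = - (s x0 x1 * s y0 y1 * (al + be) / S2) by ring.
rewrite E3 mulr0 mul0r oppr0 => /eqP; rewrite oppr_eq0 mulf_eq0 (negbTE hw) orbF => /eqP //.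
Qed.

Lemma Om_nz (d0 : B) (z : seq B) : ~~ odd (size z) ->
  (forall j, ~~ odd j -> (j.+1 < size z)%N -> s (nth d0 z j) (nth d0 z j.+1) != 0) ->
  Om z != 0.
Proof.
move: {2}(size z) (leqnn (size z)) => n; elim: n z => [|n IH] z hs ho hz.
  by case: z hs ho hz => //= *; rewrite oner_neq0.
case: z hs ho hz => [|x [|y z]] hs ho hz /=.
- by rewrite oner_neq0.
- by [].
rewrite mulf_neq0 //; first by apply: (hz 0%N).
apply: IH.
- by apply: ltnW.
- by move: ho; rewrite /= negbK.
move=> j hj hj'.
have := hz j.+2; rewrite /= negbK => /(_ hj); apply.
by [].
Qed.

End Final.
Lemma char0_nat (K : fieldType) (n : nat) : [pchar K] =i pred0 -> (0 < n)%N -> n%:R != 0 :> K.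
Proof.
move=> hc hn; apply/negP => /eqP h.
have [p hp] := natf0_pchar hn (introT eqP h).
by move: hp; rewrite hc.
Qed.

Unset Implicit Arguments.

Theorem proposition5p2 (K : fieldType) (g m : nat)
  (charK : [pchar K] =i pred0) (hm : (4 <= m)%N)
  (a b : tensor K g)
  (ha : inQVQ (m - 4) a) (hb : homog (m - 2) b)
  (hp : exists p : nat, (1 <= p)%N /\
     forall l : nat, (p <= l)%N ->
       cyc_zero (tadd (tmul a (tpow (@omega0 K g) l))
                      (tmul b (tpow (@omega0 K g) l.+1)))) :
  forall w, a w = 0.
Proof.
have [hhom hQ1 hQ2] := inQVQ_props ha.
rewrite subnK in hhom; last by [].
move=> w.
case: (eqVneq (size w) m) => hw; last by apply: hhom; rewrite hw.
case: w hw => [|x0 [|x1 rest]] hw; [by move: hw hm => <- | by move: hw hm => <- | ].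
have hr : size rest = (m - 2)%N by move: hw => /= hw; lia.
set M := take (m - 4) rest.
have hM : size M = (m - 4)%N by rewrite size_takel // hr; lia.
have hdr : size (drop (m - 4) rest) = 2%N by rewrite size_drop hr; lia.
move: hdr; case E : (drop (m - 4) rest) => [|y0 [|y1 [|? ?]]] // _.
have erest : rest = M ++ [:: y0; y1] by rewrite -E cat_take_drop.
pose i0 : 'I_g := match x0 with inl i => i | inr i => i end.
have hg : (0 < g)%N by apply: leq_ltn_trans (leq0n i0) (ltn_ord i0).
have [p [hp1 hpl]] := hp.
set l := (p + m + 4)%N.
have hl : (m + 4 <= 2 * l)%N by rewrite /l; lia.
have hpl' : (p <= l)%N by rewrite /l; lia.
have hcz := cyc_zero_cs (hpl l hpl').
set Z := Zw i0 (2 * l).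
have hZ : size Z = (2 * l)%N by rewrite size_mkseq.
have hcs : forall x0 x1 y0 y1, cs (tfun m a b) (U M x0 x1 y0 y1 ++ Z) = 0.
  move=> x0' x1' y0' y1'.
  rewrite -(hcz (U M x0' x1' y0' y1' ++ Z)) /cs; apply: eq_bigr => i _.
  have hs : size (rot i (U M x0' x1' y0' y1' ++ Z)) = (m + 2 * l)%N.
    by rewrite size_rot size_cat hZ /U /= size_cat hM /=; lia.
  set y := rot i _.
  rewrite /tadd /tfun (tmul_homogl _ _ hhom) (tmul_homogl _ _ hb) !tpowE !size_drop hs.
  have -> : (m <= m + 2 * l)%N by lia.
  have -> : (m - 2 <= m + 2 * l)%N by lia.
  have -> : (m + 2 * l - m == 2 * l)%N by apply/eqP; lia.
  have -> : (m + 2 * l - (m - 2) == 2 * l.+1)%N by apply/eqP; lia.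
  by [].
have [C [D hCD]] := shape i0 a b hm hM hl.
have hOm : Om K Z != 0.
  apply: (@Om_nz K g (inl i0) Z).
    by rewrite hZ oddE; lia.
  move=> j hj hj'; rewrite hZ in hj'.
  by rewrite !nth_mkseq ?(ltnW hj') // zf_even.
have hS : SS (fun x y : basis g => sform K x y * sform K x y) != 0.
  have -> : SS (fun x y : basis g => sform K x y * sform K x y) = (2 * g)%:R by exact: (@S2E K g).
  apply: char0_nat => //; lia.
have := final_alg (A' := fun x0 x1 y0 y1 => a (U M x0 x1 y0 y1)) hOm hS.
move=> /(_ C D) H.
rewrite erest.
apply: (H _ _ _ x0 x1 y0 y1).
- by move=> y0' y1'; apply: hQ1.
- by move=> x0' x1'; apply: (hQ2 [:: x0', x1' & M]).
move=> x0' x1' y0' y1'.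
have := hCD x0' x1' y0' y1'; rewrite hcs sub0r => ->.
by [].
Qed.
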